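(* Let $p_i(s)=\gamma_i/(m_is+d_i)$ for $i=1,\dots,n$, where $m_i\ge0$, $d_i>0$ and $\gamma_i>0$ for all $i$. Then there exists $h\in\mathrm{PR}\cap\mathscr{A}_0$ such that $p_1,\ldots,p_n\in\mathcal{P}_h$.
   Context: $\mathscr{H}_\infty$: functions analytic and bounded on $\mathrm{Re}(s)>0$; $\mathscr{A}_0$: those in $\mathscr{H}_\infty$ extending continuously to $j\mathbb{R}\cup\{\infty\}$. $g\in\mathrm{PR}$ if $g$ is analytic in $\mathrm{Re}(s)>0$, real for positive real $s$, and $\mathrm{Re}(g(s))\ge0$ for $\mathrm{Re}(s)>0$; $g\in\mathrm{ESPR}$ if moreover $g\in\mathscr{A}_0$ and $g-\epsilon\in\mathrm{PR}$ for some $\epsilon>0$. $\mathcal{P}_h:=\{p\in\mathscr{H}_\infty: p(0)\ne0,\ h(s)(1+p(s)/s)\in\mathrm{ESPR}\}$. *)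

(* Defs.v *)
From Stdlib Require Import Reals.
Open Scope R_scope.

Definition Cplx : Type := (R * R)%type.
Definition Re (z : Cplx) : R := fst z.
Definition Im (z : Cplx) : R := snd z.
Definition RtoC (x : R) : Cplx := (x, 0).
Definition Cadd (z w : Cplx) : Cplx := (fst z + fst w, snd z + snd w).
Definition Copp (z : Cplx) : Cplx := (- fst z, - snd z).
Definition Csub (z w : Cplx) : Cplx := Cadd z (Copp w).
Definition Cmul (z w : Cplx) : Cplx :=
  (fst z * fst w - snd z * snd w, fst z * snd w + snd z * fst w).
Definition Cinv (z : Cplx) : Cplx :=
  (fst z / (fst z ^ 2 + snd z ^ 2), - snd z / (fst z ^ 2 + snd z ^ 2)).
Definition Cdiv (z w : Cplx) : Cplx := Cmul z (Cinv w).
Definition Cnorm (z : Cplx) : R := sqrt (fst z ^ 2 + snd z ^ 2).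
Definition C1 : Cplx := RtoC 1.

Definition C_differentiable_at (f : Cplx -> Cplx) (z : Cplx) : Prop :=
  exists L : Cplx, forall eps, 0 < eps -> exists delta, 0 < delta /\
    forall h : Cplx, h <> RtoC 0 -> Cnorm h < delta ->
      Cnorm (Csub (Cdiv (Csub (f (Cadd z h)) (f z)) h) L) < eps.

Definition analytic_RHP (f : Cplx -> Cplx) : Prop :=
  forall z, 0 < Re z -> C_differentiable_at f z.

Definition H_inf (f : Cplx -> Cplx) : Prop :=
  analytic_RHP f /\ exists M, forall z, 0 < Re z -> Cnorm (f z) <= M.

Definition A0 (f : Cplx -> Cplx) : Prop :=
  H_inf f /\
  exists g : Cplx -> Cplx,
    (forall z, 0 < Re z -> g z = f z) /\
    (forall z, 0 <= Re z -> forall eps, 0 < eps -> exists delta, 0 < delta /\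
        forall w, 0 <= Re w -> Cnorm (Csub w z) < delta ->
          Cnorm (Csub (g w) (g z)) < eps) /\
    (exists Linf : Cplx, forall eps, 0 < eps -> exists R0,
        forall w, 0 <= Re w -> R0 < Cnorm w -> Cnorm (Csub (g w) Linf) < eps).

Definition PR (g : Cplx -> Cplx) : Prop :=
  analytic_RHP g /\
  (forall x, 0 < x -> Im (g (RtoC x)) = 0) /\
  (forall s, 0 < Re s -> 0 <= Re (g s)).

Definition ESPR (g : Cplx -> Cplx) : Prop :=
  A0 g /\ exists eps, 0 < eps /\ PR (fun s => Csub (g s) (RtoC eps)).

Definition P_h (h p : Cplx -> Cplx) : Prop :=
  H_inf p /\ p (RtoC 0) <> RtoC 0 /\
  ESPR (fun s => Cmul (h s) (Cadd C1 (Cdiv (p s) s))).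

(* Main.v *)
From Stdlib Require Import Reals Lra Psatz.
From Coquelicot Require Import Coquelicot.
Require Import Defs.
Open Scope R_scope.

Definition ctn (f : C -> C) (z : C) : Prop :=
  forall eps, 0 < eps -> exists del, 0 < del /\
    forall w, Cmod (Cminus w z) < del -> Cmod (Cminus (f w) (f z)) < eps.

Lemma Cmod_sub0 (c : C) : Cmod (Cminus c c) = 0.
Proof. replace (Cminus c c) with (Complex.RtoC 0) by ring. apply Cmod_0. Qed.

Lemma ctn_const c z : ctn (fun _ => c) z.
Proof. intros e He; exists 1; split; [lra|]; intros w _. rewrite Cmod_sub0; lra. Qed.

Lemma ctn_id z : ctn (fun w => w) z.
Proof. intros e He; exists e; split; [lra|]; intros w Hw; exact Hw. Qed.

Lemma ctn_add f g z : ctn f z -> ctn g z -> ctn (fun w => Cplus (f w) (g w)) z.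
Proof.
  intros Hf Hg e He.
  destruct (Hf (e/2)) as [d1 [Hd1 H1]]; [lra|].
  destruct (Hg (e/2)) as [d2 [Hd2 H2]]; [lra|].
  exists (Rmin d1 d2); split; [apply Rmin_pos; lra|]; intros w Hw.
  replace (Cminus (Cplus (f w) (g w)) (Cplus (f z) (g z)))
    with (Cplus (Cminus (f w) (f z)) (Cminus (g w) (g z))) by ring.
  eapply Rle_lt_trans; [apply Cmod_triangle|].
  assert (Cmod (Cminus w z) < d1) by (eapply Rlt_le_trans; [exact Hw| apply Rmin_l]).
  assert (Cmod (Cminus w z) < d2) by (eapply Rlt_le_trans; [exact Hw| apply Rmin_r]).
  specialize (H1 w H); specialize (H2 w H0); lra.
Qed.

Lemma ctn_mul f g z : ctn f z -> ctn g z -> ctn (fun w => Cmult (f w) (g w)) z.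
Proof.
  intros Hf Hg e He.
  set (K := 1 + Cmod (f z) + Cmod (g z)).
  assert (HK : 1 <= K) by (unfold K; pose proof (Cmod_ge_0 (f z)); pose proof (Cmod_ge_0 (g z)); lra).
  set (eta := Rmin 1 (e / (2*K))).
  assert (Heta : 0 < eta) by (apply Rmin_pos; [lra| apply Rdiv_lt_0_compat; lra]).
  assert (Heta1 : eta <= 1) by apply Rmin_l.
  assert (Heta2 : eta <= e/(2*K)) by apply Rmin_r.
  destruct (Hf eta Heta) as [d1 [Hd1 H1]].
  destruct (Hg eta Heta) as [d2 [Hd2 H2]].
  exists (Rmin d1 d2); split; [apply Rmin_pos; lra|]; intros w Hw.
  assert (Cmod (Cminus w z) < d1) by (eapply Rlt_le_trans; [exact Hw| apply Rmin_l]).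
  assert (Cmod (Cminus w z) < d2) by (eapply Rlt_le_trans; [exact Hw| apply Rmin_r]).
  specialize (H1 w H); specialize (H2 w H0).
  replace (Cminus (Cmult (f w) (g w)) (Cmult (f z) (g z)))
    with (Cplus (Cplus (Cmult (Cminus (f w) (f z)) (Cminus (g w) (g z)))
                       (Cmult (f z) (Cminus (g w) (g z))))
                (Cmult (Cminus (f w) (f z)) (g z))) by ring.
  eapply Rle_lt_trans; [apply Cmod_triangle|].
  eapply Rle_lt_trans; [apply Rplus_le_compat_r; apply Cmod_triangle|].
  rewrite !Cmod_mult.
  pose proof (Cmod_ge_0 (f z)); pose proof (Cmod_ge_0 (g z)).
  pose proof (Cmod_ge_0 (Cminus (f w) (f z))); pose proof (Cmod_ge_0 (Cminus (g w) (g z))).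
  assert (A2 : Cmod (f z) * Cmod (Cminus (g w) (g z)) <= Cmod (f z) * eta) by (apply Rmult_le_compat_l; lra).
  assert (A3 : Cmod (Cminus (f w) (f z)) * Cmod (g z) <= eta * Cmod (g z)) by (apply Rmult_le_compat_r; lra).
  assert (A4 : eta * K <= e/2).
  { apply Rle_trans with (e/(2*K) * K). apply Rmult_le_compat_r; lra.
    right; field; lra. }
  unfold K in A4.
  assert (A5 : Cmod (Cminus (f w) (f z)) * Cmod (Cminus (g w) (g z)) < eta) by nra.
  lra.
Qed.

Lemma Cmod_minus_sym a b : Cmod (Cminus a b) = Cmod (Cminus b a).
Proof. replace (Cminus a b) with (Complex.Copp (Cminus b a)) by ring. apply Cmod_opp. Qed.

Lemma Cmod_rev_tri a b : Cmod a - Cmod (Cminus a b) <= Cmod b.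
Proof.
  replace a with (Cplus (Cminus a b) b) at 1 by ring.
  pose proof (Cmod_triangle (Cminus a b) b). lra.
Qed.

Lemma ctn_inv f z : ctn f z -> f z <> Complex.RtoC 0 -> ctn (fun w => Complex.Cinv (f w)) z.
Proof.
  intros Hf Hz e He.
  pose proof (proj1 (Cmod_gt_0 _) Hz) as Hm.
  set (m := Cmod (f z)) in *.
  destruct (Hf (Rmin (m/2) (e*m*m/2))) as [d1 [Hd1 H1]].
  { apply Rmin_pos; [lra|]. apply Rdiv_lt_0_compat; [|lra]. repeat apply Rmult_lt_0_compat; lra. }
  exists d1; split; [lra|]; intros w Hw. specialize (H1 w Hw).
  assert (B1 : Cmod (Cminus (f w) (f z)) < m/2) by (eapply Rlt_le_trans; [exact H1|apply Rmin_l]).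
  assert (B2 : Cmod (Cminus (f w) (f z)) < e*m*m/2) by (eapply Rlt_le_trans; [exact H1|apply Rmin_r]).
  pose proof (Cmod_rev_tri (f z) (f w)) as B3. rewrite Cmod_minus_sym in B3. fold m in B3.
  assert (Hfw : f w <> Complex.RtoC 0).
  { apply Cmod_gt_0. lra. }
  replace (Cminus (Complex.Cinv (f w)) (Complex.Cinv (f z))) with (Complex.Cdiv (Cminus (f z) (f w)) (Cmult (f w) (f z)))
    by (field; auto).
  rewrite Cmod_div by (apply Cmult_neq_0; assumption).
  rewrite Cmod_mult, Cmod_minus_sym. fold m.
  apply (Rmult_lt_reg_r (Cmod (f w) * m)). nra.
  assert (P : 0 < Cmod (f w) * m) by nra. unfold Rdiv. rewrite Rmult_assoc, Rinv_l by lra. rewrite Rmult_1_r. apply Rlt_le_trans with (e*m*m/2); [lra|]. assert (m/2 <= Cmod (f w)) by lra. clearbody m. assert (0 <= e*m*(Cmod (f w) - m/2)) by (apply Rmult_le_pos; [apply Rmult_le_pos|]; lra). lra.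
Qed.

Definition CR (f : C -> C) (z : C) : Prop :=
  exists Q : C -> C, ctn Q (Complex.RtoC 0) /\ exists del, 0 < del /\
    forall h, Cmod h < del -> f (Cplus z h) = Cplus (f z) (Cmult h (Q h)).

Lemma ctn_ext f g z : (forall w, f w = g w) -> ctn f z -> ctn g z.
Proof. intros E H e He. destruct (H e He) as [d [Hd H1]]. exists d; split; auto.
  intros w Hw. rewrite <- !E. auto. Qed.

Lemma CR_ctn f z : CR f z -> ctn f z.
Proof.
  intros [Q [HQ [d0 [Hd0 HE]]]] e He.
  destruct (HQ 1) as [d1 [Hd1 H1]]; [lra|].
  set (K := Cmod (Q (Complex.RtoC 0)) + 1).
  assert (HK : 1 <= K) by (unfold K; pose proof (Cmod_ge_0 (Q (Complex.RtoC 0))); lra).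
  exists (Rmin (Rmin d0 d1) (e / K)). split.
  { repeat apply Rmin_pos; try lra. apply Rdiv_lt_0_compat; lra. }
  intros w Hw.
  assert (Hw0 : Cmod (Cminus w z) < d0) by (eapply Rlt_le_trans; [exact Hw|]; eapply Rle_trans; apply Rmin_l).
  assert (Hw1 : Cmod (Cminus w z) < d1) by (eapply Rlt_le_trans; [exact Hw|]; eapply Rle_trans; [apply Rmin_l|apply Rmin_r]).
  assert (Hw2 : Cmod (Cminus w z) < e/K) by (eapply Rlt_le_trans; [exact Hw|apply Rmin_r]).
  set (h := Cminus w z) in *.
  assert (Ew : w = Cplus z h) by (unfold h; ring).
  rewrite Ew, (HE h Hw0).
  replace (Cminus (Cplus (f z) (Cmult h (Q h))) (f z)) with (Cmult h (Q h)) by ring.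
  rewrite Cmod_mult.
  assert (Hq : Cmod (Q h) < K).
  { assert (Cmod (Cminus h (Complex.RtoC 0)) < d1) by (replace (Cminus h (Complex.RtoC 0)) with h by ring; auto).
    specialize (H1 h H).
    pose proof (Cmod_rev_tri (Q h) (Q (Complex.RtoC 0))). unfold K. lra. }
  pose proof (Cmod_ge_0 h). pose proof (Cmod_ge_0 (Q h)).
  apply Rle_lt_trans with (Cmod h * K). apply Rmult_le_compat_l; lra.
  apply Rlt_le_trans with (e / K * K). apply Rmult_lt_compat_r; lra.
  right; field; lra.
Qed.

Lemma CR_const c z : CR (fun _ => c) z.
Proof. exists (fun _ => Complex.RtoC 0). split. apply ctn_const.
  exists 1; split; [lra|]. intros h _. ring. Qed.

Lemma CR_id z : CR (fun w => w) z.
Proof. exists (fun _ => Complex.RtoC 1). split. apply ctn_const.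
  exists 1; split; [lra|]. intros h _. ring. Qed.

Lemma CR_add f g z : CR f z -> CR g z -> CR (fun w => Cplus (f w) (g w)) z.
Proof.
  intros [Q1 [C1' [d1 [Hd1 E1]]]] [Q2 [C2 [d2 [Hd2 E2]]]].
  exists (fun h => Cplus (Q1 h) (Q2 h)). split. apply ctn_add; auto.
  exists (Rmin d1 d2); split; [apply Rmin_pos; lra|]. intros h Hh.
  rewrite E1, E2 by (eapply Rlt_le_trans; [exact Hh| first [apply Rmin_l|apply Rmin_r]]). ring.
Qed.

Lemma CR_mul f g z : CR f z -> CR g z -> CR (fun w => Cmult (f w) (g w)) z.
Proof.
  intros [Q1 [C1' [d1 [Hd1 E1]]]] [Q2 [C2 [d2 [Hd2 E2]]]].
  exists (fun h => Cplus (Cplus (Cmult (Q1 h) (g z)) (Cmult (f z) (Q2 h))) (Cmult h (Cmult (Q1 h) (Q2 h)))).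
  split.
  { repeat apply ctn_add; repeat apply ctn_mul; auto using ctn_const, ctn_id. }
  exists (Rmin d1 d2); split; [apply Rmin_pos; lra|]. intros h Hh.
  rewrite E1, E2 by (eapply Rlt_le_trans; [exact Hh| first [apply Rmin_l|apply Rmin_r]]). ring.
Qed.

Lemma CR_inv f z : CR f z -> f z <> Complex.RtoC 0 -> CR (fun w => Complex.Cinv (f w)) z.
Proof.
  intros HC Hz. pose proof (CR_ctn _ _ HC) as Hct.
  destruct HC as [Q1 [C1' [d1 [Hd1 E1]]]].
  pose proof (proj1 (Cmod_gt_0 _) Hz) as Hm.
  destruct (Hct (Cmod (f z)) Hm) as [d2 [Hd2 H2]].
  exists (fun h => Complex.Copp (Complex.Cdiv (Q1 h) (Cmult (Cplus (f z) (Cmult h (Q1 h))) (f z)))).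
  split.
  { apply ctn_ext with (fun h => Cmult (Complex.RtoC (-1)) (Cmult (Q1 h) (Complex.Cinv (Cmult (Cplus (f z) (Cmult h (Q1 h))) (f z))))).
    intros w. unfold Complex.Cdiv. ring.
    apply ctn_mul. apply ctn_const. apply ctn_mul; auto. apply ctn_inv.
    apply ctn_mul; [|apply ctn_const]. apply ctn_add; [apply ctn_const|]. apply ctn_mul; auto; apply ctn_id.
    replace (Cmult (Cplus (f z) (Cmult (Complex.RtoC 0) (Q1 (Complex.RtoC 0)))) (f z)) with (Cmult (f z) (f z)) by ring.
    apply Cmult_neq_0; auto. }
  exists (Rmin d1 d2); split; [apply Rmin_pos; lra|]. intros h Hh.
  assert (Hh1 : Cmod h < d1) by (eapply Rlt_le_trans; [exact Hh| apply Rmin_l]).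
  assert (Hh2 : Cmod h < d2) by (eapply Rlt_le_trans; [exact Hh| apply Rmin_r]).
  assert (Hnz : f (Cplus z h) <> Complex.RtoC 0).
  { intro E. assert (Cmod (Cminus (Cplus z h) z) < d2) by (replace (Cminus (Cplus z h) z) with h by ring; auto).
    specialize (H2 _ H). rewrite E in H2.
    replace (Cminus (Complex.RtoC 0) (f z)) with (Complex.Copp (f z)) in H2 by ring.
    rewrite Cmod_opp in H2. lra. }
  rewrite (E1 h Hh1) in Hnz |- *. field. auto.
Qed.

Lemma CR_ext f g z : (forall w, f w = g w) -> CR f z -> CR g z.
Proof. intros E [Q [HQ [d [Hd H]]]]. exists Q; split; auto. exists d; split; auto.
  intros h Hh. rewrite <- !E. auto. Qed.

Lemma CR_diff f z : CR f z -> C_differentiable_at f z.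
Proof.
  intros [Q [HQ [d0 [Hd0 HE]]]]. exists (Q (Complex.RtoC 0)). intros e He.
  destruct (HQ e He) as [d1 [Hd1 H1]].
  exists (Rmin d0 d1); split; [apply Rmin_pos; lra|]. intros h Hnz Hh. change C in h. change (h <> Complex.RtoC 0) in Hnz.
  change (Cmod (Cminus (Complex.Cdiv (Cminus (f (Cplus z h)) (f z)) h) (Q (Complex.RtoC 0))) < e).
  change (Cmod h < Rmin d0 d1) in Hh.
  rewrite HE by (eapply Rlt_le_trans; [exact Hh|apply Rmin_l]).
  replace (Complex.Cdiv (Cminus (Cplus (f z) (Cmult h (Q h))) (f z)) h) with (Q h) by (field; exact Hnz).
  apply H1. replace (Cminus h (Complex.RtoC 0)) with h by ring.
  eapply Rlt_le_trans; [exact Hh|apply Rmin_r].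
Qed.

Lemma CR_Cadd f g z : CR f z -> CR g z -> CR (fun s => Cadd (f s) (g s)) z.
Proof. exact (CR_add f g z). Qed.
Lemma CR_Cmul f g z : CR f z -> CR g z -> CR (fun s => Cmul (f s) (g s)) z.
Proof. exact (CR_mul f g z). Qed.
Lemma CR_Cdiv f g z : CR f z -> CR g z -> g z <> RtoC 0 -> CR (fun s => Cdiv (f s) (g s)) z.
Proof. intros. exact (CR_mul f (fun w => Complex.Cinv (g w)) z H (CR_inv g z H0 H1)). Qed.
Lemma CR_Csub f g z : CR f z -> CR g z -> CR (fun s => Csub (f s) (g s)) z.
Proof. intros H1 H2. apply (CR_add f (fun s => Complex.Copp (g s))); auto.
  apply CR_ext with (fun s => Cmult (Complex.RtoC (-1)) (g s)). intros; ring.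
  apply CR_mul; auto; apply CR_const. Qed.
Lemma CR_cst (c : Cplx) z : CR (fun _ => c) z.
Proof. apply CR_const. Qed.
Lemma CR_var z : CR (fun s : Cplx => s) z.
Proof. apply CR_id. Qed.

Lemma key_ineq x y m d g a eps :
  0 <= x -> 0 <= m -> 0 < d -> 0 < g -> 0 < a -> 2*g/d <= a -> 0 <= eps -> eps <= 1/8 ->
  eps * (8*m^2*a^3 + 2*d^2*a) <= g*d/2 ->
  eps * (((x+a)^2+y^2) * ((m*x+d)^2 + m^2*y^2)) <=
  (x^2+y^2 + a*x)*((m*x+d)^2 + m^2*y^2) + g*((x+a)*(m*x+d) - m*y^2).
Proof.
  intros Hx Hm Hd Hg Ha Hag He0 He1 HeK.
  set (r := x^2+y^2). set (M := (m*x+d)^2 + m^2*y^2).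
  assert (Er : r = x^2+y^2) by reflexivity. assert (EM : M = (m*x+d)^2 + m^2*y^2) by reflexivity.
  clearbody r M.
  pose proof (pow2_ge_0 x). pose proof (pow2_ge_0 y). pose proof (pow2_ge_0 (m*x+d)).
  pose proof (pow2_ge_0 m).
  assert (Hmy : 0 <= m^2*y^2) by (apply Rmult_le_pos; lra).
  assert (Hr : 0 <= r) by lra.
  assert (HM1 : m^2*y^2 <= M) by lra.
  assert (Hmxd : d <= m*x+d) by (assert (0 <= m*x) by (apply Rmult_le_pos; lra); lra).
  assert (HM2 : d^2 <= M).
  { assert (d^2 <= (m*x+d)^2) by (simpl; apply Rmult_le_compat; lra). lra. }
  assert (HM3 : M <= 2*m^2*r + 2*d^2).
  { assert (0 <= (m*x - d)^2) by apply pow2_ge_0.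
    assert ((m*x+d)^2 = 2*(m^2*x^2) + 2*d^2 - (m*x-d)^2) by ring.
    assert (m^2*y^2 <= 2*(m^2*y^2)) by lra.
    replace (2*m^2*r) with (2*(m^2*x^2) + 2*(m^2*y^2)) by (rewrite Er; ring). lra. }
  assert (Hry : y^2 <= r) by lra.
  assert (Had : 2*g <= a*d).
  { apply Rmult_le_compat_r with (r := d) in Hag; [|lra].
    replace (2*g/d*d) with (2*g) in Hag by (field; lra). lra. }
  assert (S1 : a*d <= (x+a)*(m*x+d)).
  { apply Rmult_le_compat; lra. }
  assert (S2 : m^2*y^2*y^2 <= r*M).
  { rewrite Rmult_comm. apply Rmult_le_compat; lra. }
  assert (S3 : 0 <= (m*y^2 - g)^2) by apply pow2_ge_0.
  assert (S3' : (m*y^2 - g)^2 = m^2*y^2*y^2 - 2*g*(m*y^2) + g^2) by ring.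
  assert (S4 : (r + a*x)*M/2 + g*a*d/2 <=
           (r + a*x)*M + g*((x+a)*(m*x+d) - m*y^2)).
  { assert (g*(a*d) <= g*((x+a)*(m*x+d))) by (apply Rmult_le_compat_l; lra).
    assert (g*(2*g) <= g*(a*d)) by (apply Rmult_le_compat_l; lra).
    assert (0 <= a*x*M) by (apply Rmult_le_pos; [apply Rmult_le_pos|]; lra).
    assert ((r + a*x)*M = r*M + a*x*M) by ring.
    assert (g*((x+a)*(m*x+d) - m*y^2) = g*((x+a)*(m*x+d)) - g*(m*y^2)) by ring.
    assert (g*(2*g) = 2*g^2) by ring.
    assert (g*(a*d) = g*a*d) by ring.
    clear -S2 S3 S3' H0 H1 H2 H3 H4 H5 H6 H7 Hg. nra. }
  assert (S5 : ((x+a)^2+y^2) <= 2*(r + a*x) + a^2).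
  { assert ((x+a)^2 + y^2 = r + 2*a*x + a^2) by (rewrite Er; ring).
    assert (0 <= r) by lra. lra. }
  assert (Hrax : 0 <= r + a*x) by (assert (0 <= a*x) by (apply Rmult_le_pos; lra); lra).
  assert (HM0 : 0 <= M) by lra.
  assert (S6 : eps*(((x+a)^2+y^2)*M) <= eps*((2*(r+a*x) + a^2)*M)).
  { apply Rmult_le_compat_l; [lra|]. apply Rmult_le_compat_r; lra. }
  assert (Hgad : 0 <= g*a*d) by (apply Rmult_le_pos; [apply Rmult_le_pos|]; lra).
  assert (S7 : eps*(a^2*M) <= r*M/4 + g*a*d/2).
  { destruct (Rle_lt_dec (4*eps*a^2) r) as [Hc|Hc].
    - assert ((4*eps*a^2)*M <= r*M) by (apply Rmult_le_compat_r; lra).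
      assert (eps*(a^2*M) = (4*eps*a^2)*M/4) by field. lra.
    - assert (HM4 : M <= 8*m^2*(eps*a^2) + 2*d^2).
      { assert (m^2*r <= m^2*(4*eps*a^2)) by (apply Rmult_le_compat_l; lra).
        assert (2*m^2*r = 2*(m^2*r)) by ring.
        assert (m^2*(4*eps*a^2) = 4*(m^2*(eps*a^2))) by ring. lra. }
      assert (HM5 : M <= 8*m^2*a^2 + 2*d^2).
      { pose proof (pow2_ge_0 a).
        assert (eps*a^2 <= a^2) by (rewrite <- (Rmult_1_l (a^2)) at 2; apply Rmult_le_compat_r; lra).
        assert (m^2*(eps*a^2) <= m^2*a^2) by (apply Rmult_le_compat_l; lra).
        assert (8*m^2*(eps*a^2) = 8*(m^2*(eps*a^2))) by ring.
        assert (8*m^2*a^2 = 8*(m^2*a^2)) by ring. lra. }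
      assert (eps*(a^2*M) <= eps*(a^2*(8*m^2*a^2 + 2*d^2))).
      { apply Rmult_le_compat_l; [lra|]. apply Rmult_le_compat_l; [apply pow2_ge_0|lra]. }
      assert (eps*(a^2*(8*m^2*a^2 + 2*d^2)) = a*(eps * (8*m^2*a^3 + 2*d^2*a))) by ring.
      assert (a*(eps * (8*m^2*a^3 + 2*d^2*a)) <= a*(g*d/2)) by (apply Rmult_le_compat_l; lra).
      assert (0 <= r*M) by (apply Rmult_le_pos; lra).
      assert (a*(g*d/2) = g*a*d/2) by field.
      lra. }
  assert (S8 : eps*(2*(r+a*x)*M) <= (r+a*x)*M/4).
  { assert (0 <= (r+a*x)*M) by (apply Rmult_le_pos; lra).
    assert (eps*(2*(r+a*x)*M) = (2*eps)*((r+a*x)*M)) by ring.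
    assert ((2*eps)*((r+a*x)*M) <= (1/4)*((r+a*x)*M)) by (apply Rmult_le_compat_r; lra).
    lra. }
  assert (0 <= a*x*M) by (apply Rmult_le_pos; [apply Rmult_le_pos|]; lra).
  assert (eps*((2*(r+a*x) + a^2)*M) = eps*(2*(r+a*x)*M) + eps*(a^2*M)) by ring.
  assert ((r+a*x)*M = r*M + a*x*M) by ring.
  lra.
Qed.

Lemma eCadd : Cadd = Cplus. Proof. reflexivity. Qed.
Lemma eCmul : Cmul = Cmult. Proof. reflexivity. Qed.
Lemma eCinv : Defs.Cinv = Complex.Cinv. Proof. reflexivity. Qed.
Lemma eCdiv : Defs.Cdiv = Complex.Cdiv. Proof. reflexivity. Qed.
Lemma eCopp : Defs.Copp = Complex.Copp. Proof. reflexivity. Qed.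
Lemma eCsub : Csub = Cminus. Proof. reflexivity. Qed.
Lemma eRtoC : Defs.RtoC = Complex.RtoC. Proof. reflexivity. Qed.
Lemma eC1 : C1 = Complex.RtoC 1. Proof. reflexivity. Qed.
Lemma eCnorm : Cnorm = Cmod. Proof. reflexivity. Qed.

Ltac toC := rewrite ?eCadd, ?eCmul, ?eCinv, ?eCdiv, ?eCopp, ?eCsub, ?eRtoC, ?eC1, ?eCnorm in *;
  match goal with |- @eq _ ?x ?y => change (@eq C x y) | _ => idtac end.

Lemma nz_of_fst (z : Cplx) : 0 < fst z -> z <> Defs.RtoC 0.
Proof. intros H E. rewrite E in H. simpl in H. lra. Qed.

Lemma nz_sa a s : 0 < a -> 0 <= Defs.Re s -> Cadd s (Defs.RtoC a) <> Defs.RtoC 0.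
Proof. intros. apply nz_of_fst. unfold Defs.Re in *. simpl. lra. Qed.

Lemma nz_md m d s : 0 <= m -> 0 < d -> 0 <= Defs.Re s -> Cadd (Cmul (Defs.RtoC m) s) (Defs.RtoC d) <> Defs.RtoC 0.
Proof. intros. apply nz_of_fst. unfold Defs.Re in *. simpl.
  assert (0 <= m * fst s) by (apply Rmult_le_pos; lra). lra. Qed.

Lemma nz_s s : 0 < Defs.Re s -> s <> Defs.RtoC 0.
Proof. intros. apply nz_of_fst. exact H. Qed.

Definition hf (a : R) : Cplx -> Cplx := fun s => Cdiv s (Cadd s (Defs.RtoC a)).
Definition pf (m d g : R) : Cplx -> Cplx := fun s => Cdiv (Defs.RtoC g) (Cadd (Cmul (Defs.RtoC m) s) (Defs.RtoC d)).
Definition Gf (a m d g : R) : Cplx -> Cplx := fun s => Cmul (hf a s) (Cadd C1 (Cdiv (pf m d g s) s)).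
Definition gext (a m d g : R) : Cplx -> Cplx := fun s => Cdiv (Cadd s (pf m d g s)) (Cadd s (Defs.RtoC a)).

Lemma CR_hf a z : 0 < a -> 0 <= Defs.Re z -> CR (hf a) z.
Proof. intros. unfold hf. apply CR_Cdiv. apply CR_var. apply CR_Cadd; [apply CR_var|apply CR_cst].
  apply nz_sa; auto. Qed.

Lemma CR_pf m d g z : 0 <= m -> 0 < d -> 0 <= Defs.Re z -> CR (pf m d g) z.
Proof. intros. unfold pf. apply CR_Cdiv. apply CR_cst. apply CR_Cadd; [|apply CR_cst].
  apply CR_Cmul; [apply CR_cst|apply CR_var]. apply nz_md; auto. Qed.

Lemma CR_Gf a m d g z : 0 < a -> 0 <= m -> 0 < d -> 0 < Defs.Re z -> CR (Gf a m d g) z.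
Proof. intros. unfold Gf. apply CR_Cmul. apply CR_hf; auto; lra.
  apply CR_Cadd. apply CR_cst. apply CR_Cdiv. apply CR_pf; auto; lra. apply CR_var. apply nz_s; auto. Qed.

Lemma CR_gext a m d g z : 0 < a -> 0 <= m -> 0 < d -> 0 <= Defs.Re z -> CR (gext a m d g) z.
Proof. intros. unfold gext. apply CR_Cdiv. apply CR_Cadd. apply CR_var. apply CR_pf; auto.
  apply CR_Cadd; [apply CR_var|apply CR_cst]. apply nz_sa; auto. Qed.

Lemma Gf_gext a m d g z : 0 < a -> 0 <= m -> 0 < d -> 0 < Defs.Re z -> Gf a m d g z = gext a m d g z.
Proof. intros. pose proof (nz_sa a z H (Rlt_le _ _ H2)). pose proof (nz_md m d z H0 H1 (Rlt_le _ _ H2)).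
  pose proof (nz_s z H2). unfold Gf, gext, hf, pf. toC. field. auto. Qed.

Lemma A0_intro (f g : Cplx -> Cplx) (L : Cplx) :
 (forall z, 0 < Defs.Re z -> CR f z) ->
 (exists M, forall z, 0 < Defs.Re z -> Cmod (f z) <= M) ->
 (forall z, 0 < Defs.Re z -> g z = f z) ->
 (forall z, 0 <= Defs.Re z -> CR g z) ->
 (forall eps, 0 < eps -> exists R0, forall w, 0 <= Defs.Re w -> R0 < Cmod w -> Cmod (Cminus (g w) L) < eps) ->
 A0 f.
Proof.
  intros Hf Hb Hag Hg Hl. unfold A0, H_inf. split. { split. { intros z Hz. apply CR_diff; auto. } exact Hb. }
  exists g. split; [exact Hag|]. split.
  - intros z Hz eps He. destruct (CR_ctn _ _ (Hg z Hz) eps He) as [d [Hd H]].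
    exists d. split. exact Hd. intros w _ Hw. exact (H w Hw).
  - exists L. exact Hl.
Qed.

Lemma mod_s_le a s : 0 < a -> 0 <= Defs.Re s -> Cmod s <= Cmod (Cadd s (Defs.RtoC a)).
Proof. intros. destruct s as [x y]. unfold Defs.Re in *; simpl in *. unfold Cmod; simpl.
  apply sqrt_le_1_alt. nra. Qed.

Lemma mod_a_le a s : 0 < a -> 0 <= Defs.Re s -> a <= Cmod (Cadd s (Defs.RtoC a)).
Proof. intros. pose proof (re_le_Cmod (Cadd s (Defs.RtoC a))).
  unfold Defs.Re in *. unfold Complex.Re in H1. simpl in H1.
  rewrite Rabs_right in H1 by lra. lra. Qed.

Lemma mod_md_le m d s : 0 <= m -> 0 < d -> 0 <= Defs.Re s -> d <= Cmod (Cadd (Cmul (Defs.RtoC m) s) (Defs.RtoC d)).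
Proof. intros. pose proof (re_le_Cmod (Cadd (Cmul (Defs.RtoC m) s) (Defs.RtoC d))).
  unfold Defs.Re in *. unfold Complex.Re in H2. simpl in H2.
  assert (0 <= m * fst s) by (apply Rmult_le_pos; lra).
  rewrite Rabs_right in H2 by lra. lra. Qed.

Lemma Cmod_Cdiv x y : y <> Defs.RtoC 0 -> Cmod (Cdiv x y) = Cmod x / Cmod y.
Proof. intros. exact (Cmod_div x y H). Qed.

Lemma Cmod_RtoC r : 0 <= r -> Cmod (Defs.RtoC r) = r.
Proof. intros. change (Cmod (Complex.RtoC r) = r). rewrite Cmod_R, Rabs_right; lra. Qed.

Lemma mod_pf m d g s : 0 <= m -> 0 < d -> 0 < g -> 0 <= Defs.Re s -> Cmod (pf m d g s) <= g/d.
Proof. intros. unfold pf. rewrite Cmod_Cdiv by (apply nz_md; auto). rewrite Cmod_RtoC by lra.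
  pose proof (mod_md_le m d s H H0 H2).
  unfold Rdiv. apply Rmult_le_compat_l; [lra|]. apply Rinv_le_contravar; lra. Qed.

Lemma div_lt_helper N X B e : 0 <= N -> N <= B -> 0 < e -> 0 < X -> B / e < X -> N / X < e.
Proof. intros. apply Rmult_lt_reg_r with X; auto. unfold Rdiv. rewrite Rmult_assoc, Rinv_l by lra.
  apply Rmult_lt_compat_r with (r := e) in H3; auto. unfold Rdiv in H3.
  rewrite Rmult_assoc, Rinv_l in H3 by lra. lra. Qed.

Lemma A0_hf a : 0 < a -> A0 (hf a).
Proof.
  intros Ha. apply A0_intro with (hf a) (Defs.RtoC 1).
  - intros; apply CR_hf; auto; lra.
  - exists 1. intros z Hz. unfold hf. rewrite Cmod_Cdiv by (apply nz_sa; auto; lra).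
    pose proof (mod_s_le a z Ha (Rlt_le _ _ Hz)). pose proof (mod_a_le a z Ha (Rlt_le _ _ Hz)).
    apply Rmult_le_reg_r with (Cmod (Cadd z (Defs.RtoC a))); [lra|].
    unfold Rdiv. rewrite Rmult_assoc, Rinv_l by lra. lra.
  - auto.
  - intros; apply CR_hf; auto.
  - intros e He. exists (a / e). intros w Hw Hlt.
    pose proof (nz_sa a w Ha Hw) as Hnz.
    assert (E : Cminus (hf a w) (Defs.RtoC 1) = Cdiv (Defs.Copp (Defs.RtoC a)) (Cadd w (Defs.RtoC a))).
    { unfold hf. toC. field. auto. }
    rewrite E, Cmod_Cdiv by auto.
    replace (Cmod (Defs.Copp (Defs.RtoC a))) with a.
    2:{ change (a = Cmod (Complex.Copp (Complex.RtoC a))). rewrite Cmod_opp, Cmod_R, Rabs_right; lra. }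
    pose proof (mod_s_le a w Ha Hw).
    assert (0 < a/e) by (apply Rdiv_lt_0_compat; lra). apply div_lt_helper with a; lra.
Qed.

Lemma PR_hf a : 0 < a -> PR (hf a).
Proof.
  intros Ha. split; [|split].
  - intros z Hz. apply CR_diff, CR_hf; auto; lra.
  - intros x Hx. unfold hf, Cdiv, Cmul, Defs.Cinv, Cadd, Defs.RtoC, Im; simpl. field.
    intro Hc. nra.
  - intros [x y] Hs. unfold Defs.Re in Hs; simpl in Hs.
    unfold hf, Cdiv, Cmul, Defs.Cinv, Cadd, Defs.RtoC, Defs.Re; simpl.
    match goal with |- 0 <= ?E => replace E with ((x*(x+a)+y*y) / ((x+a)^2+y^2)) by (field; intro Hc; nra) end.
    apply Rdiv_le_0_compat; nra.
Qed.

Lemma real_RtoC r : Defs.Im (Defs.RtoC r) = 0. Proof. reflexivity. Qed.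
Lemma real_add z w : Defs.Im z = 0 -> Defs.Im w = 0 -> Defs.Im (Cadd z w) = 0.
Proof. unfold Defs.Im, Cadd; simpl; intros; lra. Qed.
Lemma real_mul z w : Defs.Im z = 0 -> Defs.Im w = 0 -> Defs.Im (Cmul z w) = 0.
Proof. unfold Defs.Im, Cmul; simpl; intros H1 H2; rewrite H1, H2; ring. Qed.
Lemma real_inv z : Defs.Im z = 0 -> Defs.Im (Defs.Cinv z) = 0.
Proof. unfold Defs.Im, Defs.Cinv; simpl; intros H1; rewrite H1; unfold Rdiv; ring. Qed.
Lemma real_div z w : Defs.Im z = 0 -> Defs.Im w = 0 -> Defs.Im (Cdiv z w) = 0.
Proof. intros. unfold Cdiv. apply real_mul; auto. apply real_inv; auto. Qed.
Lemma real_sub z w : Defs.Im z = 0 -> Defs.Im w = 0 -> Defs.Im (Csub z w) = 0.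
Proof. unfold Defs.Im, Csub, Cadd, Defs.Copp; simpl; intros; lra. Qed.

Ltac realt := repeat first [ apply real_sub | apply real_add | apply real_mul | apply real_div
                          | apply real_inv | apply real_RtoC ].

Lemma Hinf_pf m d g : 0 <= m -> 0 < d -> 0 < g -> H_inf (pf m d g).
Proof. intros. split. intros z Hz; apply CR_diff, CR_pf; auto; lra.
  exists (g/d). intros z Hz. apply mod_pf; auto; lra. Qed.

Lemma pf0 m d g : 0 <= m -> 0 < d -> 0 < g -> pf m d g (Defs.RtoC 0) <> Defs.RtoC 0.
Proof. intros Hm Hd Hg E.
  assert (F : fst (pf m d g (Defs.RtoC 0)) = g/d).
  { unfold pf, Cdiv, Cmul, Defs.Cinv, Cadd, Defs.RtoC; simpl. field. intro Hc. nra. }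
  rewrite E in F. simpl in F. assert (0 < g/d) by (apply Rdiv_lt_0_compat; lra). lra.
Qed.

Lemma A0_Gf a m d g : 0 < a -> 0 <= m -> 0 < d -> 0 < g -> A0 (Gf a m d g).
Proof.
  intros Ha Hm Hd Hg. apply A0_intro with (gext a m d g) (Defs.RtoC 1).
  - intros; apply CR_Gf; auto.
  - exists (1 + g/(d*a)). intros z Hz. rewrite Gf_gext by auto. unfold gext.
    rewrite Cmod_Cdiv by (apply nz_sa; auto; lra).
    pose proof (mod_s_le a z Ha (Rlt_le _ _ Hz)). pose proof (mod_a_le a z Ha (Rlt_le _ _ Hz)).
    pose proof (mod_pf m d g z Hm Hd Hg (Rlt_le _ _ Hz)).
    pose proof (Cmod_triangle z (pf m d g z)) as T. change (Cplus z (pf m d g z)) with (Cadd z (pf m d g z)) in T.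
    set (X := Cmod (Cadd z (Defs.RtoC a))) in *.
    apply Rmult_le_reg_r with X; [lra|].
    unfold Rdiv at 1. rewrite Rmult_assoc, Rinv_l by lra. rewrite Rmult_1_r.
    assert (g/(d*a)*X >= g/d).
    { unfold Rdiv. rewrite Rinv_mult. 
      assert (0 < g * /d) by (apply Rmult_lt_0_compat; [lra| apply Rinv_0_lt_compat; lra]).
      assert (/a * X >= 1).
      { apply Rle_ge. apply Rmult_le_reg_l with a; [lra|]. rewrite <- Rmult_assoc, Rinv_r by lra. lra. }
      replace (g * (/d * /a) * X) with ((g * /d) * (/a * X)) by ring. nra. }
    unfold Rdiv in *. lra.
  - intros; symmetry; apply Gf_gext; auto.
  - intros; apply CR_gext; auto.
  - intros e He. exists ((g/d + a) / e). intros w Hw Hlt.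
    pose proof (nz_sa a w Ha Hw) as Hnz.
    assert (E : Cminus (gext a m d g w) (Defs.RtoC 1) = Cdiv (Csub (pf m d g w) (Defs.RtoC a)) (Cadd w (Defs.RtoC a))).
    { unfold gext. toC. field. auto. }
    rewrite E, Cmod_Cdiv by auto.
    pose proof (mod_s_le a w Ha Hw).
    pose proof (mod_pf m d g w Hm Hd Hg Hw).
    pose proof (Cmod_triangle (pf m d g w) (Complex.Copp (Complex.RtoC a))) as T.
    rewrite Cmod_opp, Cmod_R, Rabs_right in T by lra.
    change (Cplus (pf m d g w) (Complex.Copp (Complex.RtoC a))) with (Csub (pf m d g w) (Defs.RtoC a)) in T.
    assert (0 < g/d) by (apply Rdiv_lt_0_compat; lra).
    assert (0 < (g/d + a)/e) by (apply Rdiv_lt_0_compat; lra).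
    pose proof (Cmod_ge_0 (Csub (pf m d g w) (Defs.RtoC a))).
    apply div_lt_helper with (g/d + a); lra.
Qed.

Lemma Gf_decomp a m d g z : 0 < a -> 0 <= m -> 0 < d -> 0 < Defs.Re z ->
  Gf a m d g z = Cadd (hf a z) (Cmul (Defs.RtoC g) (Cmul (Defs.Cinv (Cadd z (Defs.RtoC a)))
                   (Defs.Cinv (Cadd (Cmul (Defs.RtoC m) z) (Defs.RtoC d))))).
Proof. intros. pose proof (nz_sa a z H (Rlt_le _ _ H2)). pose proof (nz_md m d z H0 H1 (Rlt_le _ _ H2)).
  pose proof (nz_s z H2). unfold Gf, hf, pf. toC. field. auto. Qed.

Lemma PR_Gf a m d g eps : 0 < a -> 0 <= m -> 0 < d -> 0 < g -> 2*g/d <= a -> 0 <= eps -> eps <= 1/8 ->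
  eps * (8*m^2*a^3 + 2*d^2*a) <= g*d/2 ->
  PR (fun s => Csub (Gf a m d g s) (Defs.RtoC eps)).
Proof.
  intros Ha Hm Hd Hg Hag He0 He1 HeK. split; [|split].
  - intros z Hz. apply CR_diff, CR_Csub. apply CR_Gf; auto. apply CR_cst.
  - intros x Hx. unfold Gf, hf, pf, C1. realt.
  - intros [x y] Hs. unfold Defs.Re in Hs; simpl in Hs.
    rewrite Gf_decomp by (auto; unfold Defs.Re; simpl; lra).
    unfold hf, Csub, Defs.Copp, Cdiv, Cmul, Defs.Cinv, Cadd, Defs.RtoC, Defs.Re; simpl.
    assert (HD1 : 0 < (x+a)^2 + y^2) by nra.
    assert (HM : 0 < (m*x+d)^2 + m^2*y^2).
    { assert (0 <= m*x) by (apply Rmult_le_pos; lra). nra. }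
    match goal with |- 0 <= ?E => replace E with
      (((x^2+y^2 + a*x)*((m*x+d)^2 + m^2*y^2) + g*((x+a)*(m*x+d) - m*y^2)) /
         (((x+a)^2+y^2) * ((m*x+d)^2 + m^2*y^2)) - eps) end.
    2:{ field. split; intro Hc; nra. }
    pose proof (key_ineq x y m d g a eps (Rlt_le _ _ Hs) Hm Hd Hg Ha Hag He0 He1 HeK).
    apply Rle_trans with (eps * (((x+a)^2+y^2) * ((m*x+d)^2 + m^2*y^2)) / (((x+a)^2+y^2) * ((m*x+d)^2 + m^2*y^2)) - eps).
    + right. field. split; lra.
    + unfold Rdiv. apply Rplus_le_compat_r. apply Rmult_le_compat_r; [|exact H].
      left. apply Rinv_0_lt_compat. apply Rmult_lt_0_compat; lra.
Qed.

Lemma Ph_key a m d g : 0 < a -> 0 <= m -> 0 < d -> 0 < g -> 2*g/d <= a -> P_h (hf a) (pf m d g).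
Proof.
  intros Ha Hm Hd Hg Hag. split; [apply Hinf_pf; auto|]. split; [apply pf0; auto|].
  set (K := 8*m^2*a^3 + 2*d^2*a).
  assert (HK : 0 < K).
  { unfold K. assert (0 <= 8*m^2*a^3) by (assert (0 <= m^2) by apply pow2_ge_0;
       assert (0 < a^3) by (apply pow_lt; lra); nra). assert (0 < 2*d^2*a) by (assert (0 < d^2) by (apply pow_lt; lra); nra). lra. }
  split. apply (A0_Gf a m d g); auto.
  exists (Rmin (1/8) (g*d/(2*K))). split.
  { apply Rmin_pos; [lra|]. apply Rdiv_lt_0_compat; nra. }
  apply (PR_Gf a m d g); auto.
  - left; apply Rmin_pos; [lra|]. apply Rdiv_lt_0_compat; nra.
  - apply Rmin_l.
  - fold K. apply Rle_trans with (g*d/(2*K) * K).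
    apply Rmult_le_compat_r; [lra|apply Rmin_r]. right. field. lra.
Qed.

Fixpoint aa (d g : nat -> R) (k : nat) : R :=
  match k with O => 1 | S k => Rmax (aa d g k) (2 * g k / d k) end.

Lemma aa_ge1 d g k : 1 <= aa d g k.
Proof. induction k; simpl. lra. eapply Rle_trans; [exact IHk| apply Rmax_l]. Qed.

Lemma aa_ge d g k i : (i < k)%nat -> 2 * g i / d i <= aa d g k.
Proof. induction k; intros H. lia. simpl. destruct (Nat.eq_dec i k) as [->|Hne].
  apply Rmax_r. eapply Rle_trans; [apply IHk; lia| apply Rmax_l]. Qed.

Theorem corollary1 (n : nat) (m d gamma : nat -> R)
  (Hm : forall i, (i < n)%nat -> 0 <= m i)
  (Hd : forall i, (i < n)%nat -> 0 < d i)
  (Hg : forall i, (i < n)%nat -> 0 < gamma i) :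
  exists h : Cplx -> Cplx, PR h /\ A0 h /\
    forall i, (i < n)%nat ->
      P_h h (fun s => Cdiv (RtoC (gamma i))
                           (Cadd (Cmul (RtoC (m i)) s) (RtoC (d i)))).
Proof.
  pose proof (aa_ge1 d gamma n) as Ha.
  exists (hf (aa d gamma n)). split; [apply PR_hf; lra|]. split; [apply A0_hf; lra|].
  intros i Hi. apply (Ph_key (aa d gamma n) (m i) (d i) (gamma i)); auto; try lra.
  apply aa_ge; auto.
Qed.
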